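(* Let $\mathcal M=(G,In,Out,Leak)$ be a strongly connected linear compartmental model with $n$ compartments, $In=\{j\}$ and $Out=\{i\}$. Write the input-output equation as $$y_i^{(n)}+c_{n-1}y_i^{(n-1)}+\dots+c_1y_i'+c_0y_i=(-1)^{i+j}\left(d_{n-1}u_j^{(n-1)}+\dots+d_1u_j'+d_0u_j\right).$$ The coefficients on the left-hand side that are non-constant (as polynomials in the parameters) are exactly $c_0,c_1,\dots,c_{n-1}$ if $Leak\ne\emptyset$, and $c_1,\dots,c_{n-1}$ if $Leak=\emptyset$. The coefficients on the right-hand side that are non-constant are exactly $d_0,d_1,\dots,d_{n-2}$ if $In=Out$, and $d_0,d_1,\dots,d_{n-L-1}$ if $In\ne Out$, where $L$ is the length of a shortest directed path in $G$ from $j$ to $i$.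
   Context: A linear compartmental model $\mathcal M=(G,In,Out,Leak)$ consists of a finite directed graph $G=(V_G,E_G)$ without multi-edges, compartments $V_G=\{1,\dots,n\}$, and subsets $In,Out,Leak\subseteq V_G$; edge $k\to \ell$ carries parameter $a_{\ell k}$ and each $\ell\in Leak$ carries $a_{0\ell}$, and the parameters are independent indeterminates. The compartmental matrix $A$ has $A_{\ell\ell}=-\sum_{k:\,\ell\to k\in E_G}a_{k\ell}$ (minus $a_{0\ell}$ if $\ell\in Leak$), $A_{\ell k}=a_{\ell k}$ if $k\to\ell\in E_G$, $0$ otherwise. With $B^{p,q}$ denoting removal of row $p$ and column $q$, the input-output equation is $\det(\partial I-A)y_i=(-1)^{i+j}\det((\partial I-A)^{j,i})u_j$, $\partial I$ the diagonal matrix of $d/dt$'s; its coefficients are polynomials in the parameters. *)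

(* Defs.v *)
From HB Require Import structures.
From mathcomp Require Import all_boot all_order all_algebra.
From mathcomp Require Import mpoly.
Set Implicit Arguments. Unset Strict Implicit. Unset Printing Implicit Defensive.
Import GRing.Theory.
Local Open Scope ring_scope.

(* Linear compartmental models with N compartments, labelled by 'I_N.
   The graph G is given by its edge relation E : rel 'I_N, where
   E k l means that there is a directed edge k -> l.                  *)

(* Parameters: inl (l,k) stands for a_{l k} (edge k -> l),
   inr l stands for the leak parameter a_{0 l}. *)
Definition param (N : nat) : finType := ('I_N * 'I_N + 'I_N)%type.

Definition paramRing (N : nat) := {mpoly rat[#|param N|]}.

Definition a_edge (N : nat) (l k : 'I_N) : paramRing N :=
  'X_(enum_rank (inl (l, k) : param N)).
Definition a_leak (N : nat) (l : 'I_N) : paramRing N :=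
  'X_(enum_rank (inr l : param N)).

Definition comp_matrix (N : nat) (E : rel 'I_N) (Leak : {set 'I_N}) :
  'M[paramRing N]_N :=
  \matrix_(l, k)
    if l == k then
      - (\sum_(m | E l m) a_edge m l) - (if l \in Leak then a_leak l else 0)
    else if E k l then a_edge l k else 0.

Definition loopless (N : nat) (E : rel 'I_N) := forall k, ~~ E k k.

Definition strongly_connected (N : nat) (E : rel 'I_N) :=
  forall x y, connect E x y.

Definition has_path_of_length (N : nat) (E : rel 'I_N) (x y : 'I_N) (m : nat) :=
  exists p : seq 'I_N, [/\ size p = m, path E x p & last x p = y].

Definition shortest_path_length (N : nat) (E : rel 'I_N) (x y : 'I_N) (L : nat) :=
  has_path_of_length E x y L /\ forall m, has_path_of_length E x y m -> (L <= m)%N.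

Definition mconstant (k : nat) (p : {mpoly rat[k]}) := exists c : rat, p = c%:MP.

(* Left-hand-side polynomial det(dI - A) (coefficients c_k, with d = 'X)
   and right-hand-side polynomial det((dI - A)^{j,i}) (coefficients d_k),
   for a model with n.+1 compartments. *)
Definition io_lhs (n : nat) (E : rel 'I_n.+1) (Leak : {set 'I_n.+1}) :
  {poly paramRing n.+1} := char_poly (comp_matrix E Leak).

Definition io_rhs (n : nat) (E : rel 'I_n.+1) (Leak : {set 'I_n.+1}) (i j : 'I_n.+1) :
  {poly paramRing n.+1} :=
  \det (row' j (col' i (char_poly_mx (comp_matrix E Leak)))).

(* Main.v *)
Require Import Defs.
From HB Require Import structures.
From mathcomp Require Import all_boot all_order all_algebra.
From mathcomp Require Import mpoly.
From mathcomp Require Import fingroup perm.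
From mathcomp Require Import ring zify.
Set Implicit Arguments. Unset Strict Implicit. Unset Printing Implicit Defensive.
Import Order.TTheory GRing.Theory Num.Theory.
Local Open Scope ring_scope.

Lemma det_graded (R : comNzRingType) (N : nat) (M : 'M[R]_N) (w : 'I_N -> nat) :
  (forall l k, l != k -> (w k <= w l)%N -> M l k = 0) ->
  \det M = \prod_k M k k.
Proof.
move=> HM; rewrite /determinant (bigD1 (1%g : 'S_N)) //= [X in _ + X]big1 ?addr0.
  by rewrite odd_perm1 expr0 mul1r; apply: eq_bigr => k _; rewrite perm1.
move=> s sn1.
case: (boolP [exists k, (s k != k) && (w (s k) <= w k)%N]).
  case/existsP=> k /andP[sk wk].
  by rewrite (bigD1 k) //= HM ?mul0r ?mulr0 // eq_sym.
rewrite negb_exists => /forallP H.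
have [k0 sk0] : exists k, s k != k.
  apply/existsP; apply: contraR sn1; rewrite negb_exists => /forallP H1.
  by apply/eqP/permP => k; rewrite perm1; apply/eqP; rewrite -[_ == _]negbK H1.
have lt: (\sum_k w k < \sum_k w (s k))%N.
  rewrite (bigD1 k0) //= [X in (_ < X)%N](bigD1 k0) //= -addSn leq_add //.
    by move: (H k0); rewrite sk0 /= -ltnNge.
  apply: leq_sum => k _; move: (H k); case: eqP => [->//|_] /=.
  by rewrite -ltnNge => /ltnW.
move: lt; rewrite (reindex_inj (@perm_inj _ s)) /= ltnn //.
Qed.

Lemma coefX1 (m : nat) : forall k,
  0 <= (('X + 1 : {poly rat}) ^+ m)`_k /\ ((k <= m)%N -> 0 < (('X + 1 : {poly rat}) ^+ m)`_k).
Proof.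
elim: m => [|m IH] k.
  rewrite expr0 coefC; case: k => [|k] //=; split => //.
rewrite exprS mulrDl mul1r coefD coefXM.
case: k => [|k] /=.
  by rewrite add0r; have [h1 h2] := IH 0%N; split => // _; exact: h2.
have [a1 a2] := IH k; have [b1 b2] := IH k.+1.
split; first exact: addr_ge0.
move=> hk; case: (leqP k.+1 m) => h.
  exact: ltr_wpDl a1 (b2 h).
by apply: ltr_wpDr b1 (a2 _); rewrite -ltnS.
Qed.

Lemma coefX1_neq0 (m k : nat) : (k <= m)%N -> (('X + 1 : {poly rat}) ^+ m)`_k != 0.
Proof. by move=> h; have [_ /(_ h) h2] := coefX1 m k; rewrite gt_eqF. Qed.

Definition hp (N : nat) (E : rel 'I_N) (x y : 'I_N) (m : nat) : bool :=
  [exists p : m.-tuple 'I_N, path E x p && (last x p == y)].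

Lemma hpP N (E : rel 'I_N) x y m : reflect (has_path_of_length E x y m) (hp E x y m).
Proof.
apply: (iffP existsP).
  by case=> p /andP[h1 /eqP h2]; exists p; split => //; rewrite size_tuple.
case=> p [hs h1 h2]; have hs' : size p == m by rewrite hs.
by exists (Tuple hs'); rewrite /= h1 h2 eqxx.
Qed.

Lemma hp0 N (E : rel 'I_N) x y : has_path_of_length E x y 0 <-> x = y.
Proof.
split; first by case=> p [/size0nil -> _ /= ->].
by move=> ->; exists [::].
Qed.

Lemma hpS N (E : rel 'I_N) x z y m :
  E x z -> has_path_of_length E z y m -> has_path_of_length E x y m.+1.
Proof. by move=> hE [p [hs h1 h2]]; exists (z :: p); rewrite /= hE hs h1. Qed.

Lemma hpS_inv N (E : rel 'I_N) x y m :
  has_path_of_length E x y m.+1 -> exists2 z, E x z & has_path_of_length E z y m.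
Proof.
case=> [[|z p]] [hs hp hl] //=.
move: hp => /= /andP[h1 h2]; case: hs => hs.
by exists z => //; exists p.
Qed.

Lemma ex_hp N (E : rel 'I_N) x r : strongly_connected E -> exists m, hp E x r m.
Proof.
move=> sc; have /connectP[p h1 h2] := sc x r.
by exists (size p); apply/hpP; exists p.
Qed.

Definition dist N (E : rel 'I_N) (r : 'I_N) (sc : strongly_connected E) (x : 'I_N) : nat :=
  ex_minn (ex_hp x r sc).

Section DistTheory.
Context (N : nat) (E : rel 'I_N) (r : 'I_N) (sc : strongly_connected E).
Local Notation d := (dist r sc).

Lemma dist_hp x : has_path_of_length E x r (d x).
Proof. by rewrite /dist; case: ex_minnP => m /hpP. Qed.

Lemma dist_min x m : has_path_of_length E x r m -> (d x <= m)%N.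
Proof. by rewrite /dist; case: ex_minnP => m0 _ H /hpP /H. Qed.

Lemma dist0 x : (d x == 0%N) = (x == r).
Proof.
apply/eqP/eqP => [h|->].
  by have := dist_hp x; rewrite h => /hp0.
by apply/eqP; rewrite -leqn0; apply: dist_min; apply/hp0.
Qed.

Lemma dist_r : d r = 0%N.
Proof. by apply/eqP; rewrite dist0. Qed.

Lemma dist_edge x z : E x z -> (d x <= (d z).+1)%N.
Proof. by move=> h; apply: dist_min; apply: hpS h (dist_hp z). Qed.

Lemma ex_par x : x != r -> exists z, E x z && (d z < d x)%N.
Proof.
rewrite -dist0; have := dist_hp x; case: (d x) => [|m] // /hpS_inv [z h1 h2] _.
by exists z; rewrite h1 /= ltnS (dist_min h2).
Qed.

Definition par (x : 'I_N) : 'I_N := odflt x [pick z | E x z && (d z < d x)%N].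

Lemma par_spec x : x != r -> E x (par x) /\ d (par x) = (d x).-1.
Proof.
move=> h; rewrite /par; case: pickP => [z /andP[h1 h2]|H] /=.
  split => //; have := dist_edge h1; move: h2; case: (d x) => // m.
  by rewrite ltnS /= => h2 h3; apply/eqP; rewrite eqn_leq h2.
by have [z hz] := ex_par h; rewrite H in hz.
Qed.

End DistTheory.

Definition Qp (R : nzRingType) N (E : rel 'I_N) (r : nat) (C : 'M[R]_N) :=
  forall x y, C x y != 0 -> exists2 t, (t <= r)%N & has_path_of_length E y x t.

Lemma Qp_add (R : nzRingType) N (E : rel 'I_N) r (C D : 'M[R]_N) :
  Qp E r C -> Qp E r D -> Qp E r (C + D).
Proof.
move=> hC hD x y; rewrite mxE; case: (eqVneq (C x y) 0) => [->|/hC//].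
by rewrite add0r => /hD.
Qed.

Lemma Qp_scalar (R : nzRingType) N (E : rel 'I_N) r (c : R) : Qp E r (c%:M).
Proof.
move=> x y; rewrite mxE; case: (eqVneq x y) => [->|]; last by rewrite mulr0n eqxx.
by move=> _; exists 0%N => //; apply/hp0.
Qed.

Lemma Qp_zero (R : nzRingType) N (E : rel 'I_N) r : Qp E r (0 : 'M[R]_N).
Proof. by move=> x y; rewrite mxE eqxx. Qed.

Lemma Qp_mul (R : nzRingType) N (E : rel 'I_N) r (C A : 'M[R]_N) :
  (forall z y, z != y -> A z y != 0 -> E y z) ->
  Qp E r C -> Qp E r.+1 (C *m A).
Proof.
move=> hA hC x y; rewrite mxE => h.
case: (boolP [exists z, C x z * A z y != 0]); last first.
  rewrite negb_exists => /forallP H; move: h; rewrite big1 ?eqxx // => z _.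
  by apply/eqP; rewrite -[_ == _]negbK H.
case/existsP=> z hz.
have hCz : C x z != 0 by apply: contraNneq hz => ->; rewrite mul0r.
have hAz : A z y != 0 by apply: contraNneq hz => ->; rewrite mulr0.
have [t ht hpt] := hC _ _ hCz.
case: (eqVneq z y) => [<-|zy]; first by exists t => //; apply: leqW.
by exists t.+1 => //; apply: hpS (hA _ _ zy hAz) hpt.
Qed.

Lemma Qp_mono (R : nzRingType) N (E : rel 'I_N) r r' (C : 'M[R]_N) :
  (r <= r')%N -> Qp E r C -> Qp E r' C.
Proof. by move=> h hC x y /hC [t ht hh]; exists t => //; apply: leq_trans h. Qed.

Section AdjCoef.
Context (R : comNzRingType) (N : nat) (E : rel 'I_N) (A : 'M[R]_N).
Hypothesis hA : forall z y, z != y -> A z y != 0 -> E y z.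
Let M := char_poly_mx A.
Let B (m : nat) : 'M[R]_N := \matrix_(x, y) (\adj M x y)`_m.

Lemma cpE z y : M z y = 'X *+ (z == y) - (A z y)%:P.
Proof. by rewrite /M !mxE. Qed.

Lemma BE m x y : B m x y = (\adj M x y)`_m.
Proof. by rewrite /B [LHS]mxE. Qed.

Lemma B_rec m : B m = ((char_poly A)`_m.+1)%:M + B m.+1 *m A.
Proof.
apply/matrixP => x y.
have H := congr1 (fun C : 'M[{poly R}]_N => (C x y)`_m.+1) (mul_adj_mx M).
move: H; rewrite /= [in X in _ = X]mxE [in X in X = _]mxE -/(char_poly A).
rewrite (bigD1 y) //= cpE eqxx mulr1n mulrBr coefD coefB coefMX coefMC /=.
rewrite coef_sum coefMn.
under eq_bigr => z hz do rewrite cpE (negbTE hz) mulr0n sub0r mulrN coefN coefMC.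
move=> H.
rewrite [LHS]BE [in RHS]mxE [in RHS]mxE [X in _ + X]mxE (bigD1 y) //=.
rewrite [in RHS]BE. 
under [in RHS]eq_bigr => z hz do rewrite BE.
rewrite -H sumrN.
by ring.
Qed.

Let K := \max_(xy : 'I_N * 'I_N) size (\adj M xy.1 xy.2).

Lemma B_big m : (K <= m)%N -> B m = 0.
Proof.
move=> hm; apply/matrixP => x y; rewrite BE nth_default; first by rewrite mxE.
apply: leq_trans hm; exact: (leq_bigmax (x, y)).
Qed.

Lemma B_zeroN m : (N <= m)%N -> B m = 0.
Proof.
suff H : forall t m, (K - t <= m)%N -> (N <= m)%N -> B m = 0.
  by apply: (H K); rewrite subnn.
elim=> [|t IH] {}m h1 h2; first by apply: B_big; rewrite subn0 in h1.
case: (leqP (K - t) m) => h3; first exact: IH.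
rewrite B_rec IH; last 2 first.
- by lia.
- exact: leqW.
rewrite mul0mx addr0 nth_default ?scalemx0 //.
  by apply/matrixP => a b; rewrite !mxE mul0rn.
by rewrite size_char_poly.
Qed.

Lemma B_Qp m : Qp E (N.-1 - m) (B m).
Proof.
suff H : forall t m, (N - t <= m)%N -> Qp E (N.-1 - m) (B m).
  by apply: (H N); rewrite subnn.
elim=> [|t IH] {}m h1; first by rewrite subn0 in h1; rewrite B_zeroN //; apply: Qp_zero.
case: (leqP (N - t) m) => h3; first exact: IH.
have hmN : (m < N)%N by apply: leq_trans h3 (leq_subr _ _).
rewrite B_rec; apply: Qp_add; first exact: Qp_scalar.
case: (eqVneq m.+1 N) => hm.
  by rewrite B_zeroN ?hm // mul0mx; exact: Qp_zero.
apply: Qp_mono (Qp_mul hA (IH m.+1 _)).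
  by rewrite -subSn; [rewrite subSS | rewrite -ltnS (ltn_predK hmN); rewrite ltn_neqAle hm].
by move: h1; rewrite subnS => h1; rewrite -(ltn_predK h3) in h1 *.
Qed.

End AdjCoef.

Lemma adj_coef_path (R : comNzRingType) (N : nat) (E : rel 'I_N) (A : 'M[R]_N) :
  (forall z y, z != y -> A z y != 0 -> E y z) ->
  forall m x y, (\adj (char_poly_mx A) x y)`_m != 0 ->
  exists2 t, (t <= N.-1 - m)%N & has_path_of_length E y x t.
Proof.
move=> hA m x y h; apply: (B_Qp hA); rewrite mxE; exact: h.
Qed.

Definition spec N (f : param N -> rat) : 'I_#|param N| -> rat := fun x => f (enum_val x).

Definition smx N (E : rel 'I_N) (Leak : {set 'I_N}) (f : param N -> rat) : 'M[rat]_N :=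
  \matrix_(l, k) if l == k then - (\sum_(m | E l m) f (inl (m, l))) - (if l \in Leak then f (inr l) else 0)
                 else if E k l then f (inl (l, k)) else 0.

Lemma meval_edge N f (l k : 'I_N) : (a_edge l k).@[spec f] = f (inl (l,k)).
Proof. by rewrite /a_edge mevalXU /spec enum_rankK. Qed.

Lemma meval_leak N f (l : 'I_N) : (a_leak l).@[spec f] = f (inr l).
Proof. by rewrite /a_leak mevalXU /spec enum_rankK. Qed.

Lemma map_comp N (E : rel 'I_N) Leak f :
  map_mx (meval (spec f)) (comp_matrix E Leak) = smx E Leak f.
Proof.
apply/matrixP => l k; rewrite !mxE.
case: eqP => _.
  rewrite rmorphB rmorphN rmorph_sum /=.
  under eq_bigr => m _ do rewrite meval_edge.
  by case: (l \in Leak); rewrite ?meval_leak ?rmorph0.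
by case: (E k l); rewrite ?meval_edge ?rmorph0.
Qed.

Lemma nonconst k (p : {mpoly rat[k]}) v1 v2 : p.@[v1] != p.@[v2] -> ~ mconstant p.
Proof. by move=> h [c hc]; move: h; rewrite hc !mevalC eqxx. Qed.

Lemma eval_lhs n (E : rel 'I_n.+1) Leak f k :
  ((io_lhs E Leak)`_k).@[spec f] = (char_poly (smx E Leak f))`_k.
Proof. by rewrite -coef_map /io_lhs map_char_poly map_comp. Qed.

Lemma eval_rhs n (E : rel 'I_n.+1) Leak i j f k :
  ((io_rhs E Leak i j)`_k).@[spec f] =
  (\det (row' j (col' i (char_poly_mx (smx E Leak f)))))`_k.
Proof.
by rewrite -coef_map /io_rhs -det_map_mx map_row' map_col' map_char_poly_mx map_comp.
Qed.

Lemma smx0 N (E : rel 'I_N) Leak : smx E Leak (fun _ => 0) = 0.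
Proof.
apply/matrixP => l k; rewrite !mxE big1 // oppr0 sub0r.
by case: eqP; case: (l \in Leak); case: (E k l); rewrite ?oppr0.
Qed.

Lemma cpmE (R : comNzRingType) N (B : 'M[R]_N) l k :
  char_poly_mx B l k = 'X *+ (l == k) - (B l k)%:P.
Proof. by rewrite !mxE. Qed.

Section Tree.
Context (N : nat) (E : rel 'I_N) (Leak : {set 'I_N}) (r : 'I_N) (sc : strongly_connected E) (lk : bool).
Local Notation d := (dist r sc).
Local Notation pr := (par r sc).

Definition ftree (p : param N) : rat :=
  match p with
  | inl (l, k) => if (k != r) && (l == pr k) then 1 else 0
  | inr l => if lk && (l == r) then 1 else 0
  end.

Local Notation As := (smx E Leak ftree).

Lemma tree_diag l : As l l = if l == r then - (if lk && (r \in Leak) then 1 else 0) else -1.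
Proof.
rewrite mxE eqxx /=.
case: (eqVneq l r) => [->|hl].
  rewrite big1 ?oppr0 ?sub0r //.
  by rewrite /= andbT; case: lk; case: (r \in Leak).
have [hE _] := par_spec sc hl.
rewrite (bigD1 (pr l)) //= eqxx /= big1 ?addr0; last first.
  by move=> m /andP[_ hm]; rewrite (negbTE hm).
by case: (l \in Leak); rewrite /= ?andbF ?subr0.
Qed.

Lemma tree_off l k : l != k -> As l k = if (k != r) && (l == pr k) then 1 else 0.
Proof.
move=> hlk; rewrite mxE (negbTE hlk).
case: (eqVneq k r) => [->|hk] /=; first by rewrite eqxx; case: (E r l).
case: (eqVneq l (pr k)) => [->|hl]; first by have [-> _] := par_spec sc hk; rewrite hk.
by rewrite andbF; case: (E k l).
Qed.

Lemma tree_graded l k : l != k -> (d k <= d l)%N -> char_poly_mx As l k = 0.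
Proof.
move=> hlk hd; rewrite cpmE (negbTE hlk) mulr0n sub0r tree_off //.
case: (eqVneq k r) => [//|hk] /=; first by rewrite oppr0.
case: (eqVneq l (pr k)) => [hl|]; last by rewrite oppr0.
have [_ hdk] := par_spec sc hk; move: hd; rewrite hl hdk.
have : d k != 0%N by rewrite dist0.
by case: (d k) => // m _; rewrite ltnn.
Qed.

Lemma tree_char : char_poly As = \prod_k ('X - (As k k)%:P).
Proof.
rewrite /char_poly (det_graded tree_graded).
by apply: eq_bigr => k _; rewrite cpmE eqxx mulr1n.
Qed.

End Tree.

Lemma adj_col_unique (R : idomainType) N (M : 'M[R]_N) (z : 'cV[R]_N) j :
  \det M != 0 -> M *m z = col j ((\det M)%:M) -> col j (\adj M) = z.
Proof.
move=> hd hz.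
have h1 : M *m (col j (\adj M) - z) = 0.
  by rewrite mulmxBr hz !colE mulmxA mul_mx_adj subrr.
have : \adj M *m (M *m (col j (\adj M) - z)) = 0 by rewrite h1 mulmx0.
rewrite mulmxA mul_adj_mx mul_scalar_mx => /eqP.
by rewrite scalemx_eq0 (negbTE hd) /= subr_eq0 => /eqP.
Qed.

Section ZVec.
Context (n : nat) (E : rel 'I_n.+1) (Leak : {set 'I_n.+1}) (r : 'I_n.+1)
  (sc : strongly_connected E) (j : 'I_n.+1) (L : nat).
Hypothesis hdj : dist r sc j = L.
Hypothesis hL1 : (1 <= L)%N.
Hypothesis hLn : (L <= n)%N.
Local Notation d := (dist r sc).
Local Notation pr := (par r sc).
Local Notation As := (smx E Leak (ftree r sc false)).
Local Notation M := (char_poly_mx As).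

Lemma dist_iter s : (s <= L)%N -> d (iter s pr j) = (L - s)%N.
Proof.
elim: s => [|s IH] hs; first by rewrite subn0.
rewrite iterS; have hs' : (s <= L)%N by apply: ltnW.
have hne : iter s pr j != r by rewrite -(@dist0 _ _ r sc) IH //; lia.
by have [_ ->] := par_spec sc hne; rewrite IH //; lia.
Qed.

Definition onp v := (d v <= L)%N && (v == iter (L - d v) pr j).

Lemma onp_j : onp j.
Proof. by rewrite /onp hdj leqnn subnn eqxx. Qed.

Lemma onp_r : onp r.
Proof.
rewrite /onp dist_r subn0 leq0n /=; rewrite eq_sym -(@dist0 _ _ r sc) dist_iter //; lia.
Qed.

Lemma onp_child k v : onp k -> k != r -> v = pr k ->
  [/\ onp v, (d v < L)%N, k = iter (L - d v).-1 pr j & d k = (d v).+1].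
Proof.
move=> /andP[hk1 /eqP hk2] hkr ->.
have [_ hd] := par_spec sc hkr.
have hk0 : d k != 0%N by rewrite (@dist0 _ _ r sc).
have e1 : (L - (d k).-1 = (L - d k).+1)%N by lia.
split.
- rewrite /onp hd e1; apply/andP; split; first by lia.
  by rewrite iterS -hk2.
- by rewrite hd; lia.
- by rewrite hd e1 /=.
- by rewrite hd; lia.
Qed.

Lemma onp_par v : onp v -> (d v < L)%N ->
  let k0 := iter (L - d v).-1 pr j in
  [/\ onp k0, k0 != r, pr k0 = v & d k0 = (d v).+1].
Proof.
move=> /andP[hv1 /eqP hv2] hvL k0.
have hdk0 : d k0 = (d v).+1 by rewrite /k0 dist_iter; lia.
have hk0r : k0 != r by rewrite -(@dist0 _ _ r sc) hdk0.
split => //.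
- rewrite /onp hdk0; apply/andP; split; first by lia.
  by rewrite /k0; apply/eqP; congr iter; lia.
- rewrite /k0 -iterS prednK; first by rewrite -hv2.
  by lia.
Qed.

Definition zf (t : nat) : {poly rat} :=
  if t is t'.+1 then 'X * ('X + 1) ^+ (n - L + t') else ('X + 1) ^+ (n - L).
Definition zv : 'cV[{poly rat}]_n.+1 := \col_v (if onp v then zf (d v) else 0).

Lemma As_diag v : As v v = if v == r then 0 else -1.
Proof. by rewrite tree_diag /=; case: (v == r); rewrite ?oppr0. Qed.

Lemma detM : \det M = 'X * ('X + 1) ^+ n.
Proof.
rewrite -/(char_poly As) tree_char (bigD1 r) //= As_diag eqxx subr0.
congr (_ * _).
under eq_bigr => k hk do rewrite As_diag (negbTE hk) rmorphN rmorph1 opprK.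
by rewrite prodr_const cardC1 card_ord.
Qed.

Lemma term_off v k : k != v ->
  M v k * zv k 0 = if [&& onp k, k != r & v == pr k] then - zf (d k) else 0.
Proof.
move=> hk; have hk' : v != k by rewrite eq_sym.
rewrite cpmE (negbTE hk') mulr0n sub0r tree_off // mxE.
case: (onp k); case: (k != r); case: (v == pr k) => /=;
  by rewrite ?rmorph1 ?rmorph0 ?oppr0 ?mul0r ?mulr0 ?mulN1r.

Qed.

Lemma Mz_row v : \sum_k M v k * zv k 0 = (\det M) *+ (v == j).
Proof.
rewrite (bigD1 v) //=.
under eq_bigr => k hk do rewrite term_off //.
rewrite cpmE eqxx mulr1n As_diag [zv v 0]mxE.
case: (boolP (onp v && (d v < L)%N)) => [/andP[hv hvL]|hn].
  have [hk0 hk0r hpk0 hdk0] := onp_par hv hvL.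
  set k0 := iter (L - d v).-1 pr j in hk0 hk0r hpk0 hdk0.
  have hk0v : k0 != v by apply/eqP => e; move: hdk0; rewrite e; lia.
  rewrite (bigD1 k0) //= hk0 hk0r hpk0 eqxx /= big1 ?addr0; last first.
    move=> k /andP[hkv hkk0]; case: (boolP [&& onp k, k != r & v == pr k]) => //.
    case/and3P=> h1 h2 /eqP h3; have [_ _ e _] := onp_child h1 h2 h3.
    by move: hkk0; rewrite e eqxx.
  have hvj : v != j by apply/eqP => e; move: hvL; rewrite e hdj ltnn.
  rewrite (negbTE hvj) mulr0n hv hdk0 /=.
  case: (eqVneq v r) => [e|hvr].
    rewrite e dist_r /= subr0 addn0; ring.
  have : d v != 0%N by rewrite (@dist0 _ _ r sc).
  case: (d v) => [//|t] _ /=; rewrite addnS exprS; ring.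
rewrite big1 ?addr0; last first.
  move=> k hkv; case: (boolP [&& onp k, k != r & v == pr k]) => //.
  case/and3P=> h1 h2 /eqP h3; have [e1 e2 _ _] := onp_child h1 h2 h3.
  by case/negP: hn; rewrite e1 e2.
case: (boolP (onp v)) => hv; last first.
  have hvj : v != j by apply: contraNneq hv => ->; exact: onp_j.
  by rewrite (negbTE hvj) mulr0n mulr0.
have hvL : d v = L.
  have hle : (d v <= L)%N by case/andP: hv.
  by rewrite hv /= -leqNgt in hn; lia.
have -> : v = j.
  by move: hv; rewrite /onp hvL subnn => /andP[_ /eqP].
have hjr : j != r by rewrite -(@dist0 _ _ r sc) hdj; lia.
rewrite eqxx mulr1n (negbTE hjr) hdj detM rmorphN rmorph1 opprK.
have [t ht] : exists t, L = t.+1 by exists L.-1; lia.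
rewrite ht /=.
rewrite -[in RHS](_ : ((n - t.+1 + t).+1 = n)%N); last by lia.
rewrite exprS ht; ring.
Qed.

Lemma Mz : M *m zv = col j ((\det M)%:M).
Proof.
apply/matrixP => v x; rewrite (ord1 x) [LHS]mxE Mz_row.
by rewrite [RHS]mxE [RHS]mxE.
Qed.

Lemma adj_tree : \adj M r j = ('X + 1) ^+ (n - L).
Proof.
have hd : \det M != 0.
  by rewrite detM mulf_neq0 ?polyX_eq0 // expf_neq0 // -size_poly_eq0 size_XaddC.
have := congr1 (fun C : 'cV[{poly rat}]_n.+1 => C r 0) (adj_col_unique hd Mz).
by rewrite /= [LHS]mxE [RHS]mxE onp_r dist_r.
Qed.

End ZVec.

Lemma char_poly0 (R : comNzRingType) N : char_poly (0 : 'M[R]_N) = 'X ^+ N.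
Proof. by rewrite /char_poly /char_poly_mx map_mx0 subr0 det_scalar. Qed.

Lemma sub_cp (R : comNzRingType) N (B : 'M[R]_N.+1) j :
  row' j (col' j (char_poly_mx B)) = char_poly_mx (row' j (col' j B)).
Proof.
apply/matrixP => a b; rewrite cpmE [LHS]mxE [LHS]mxE cpmE.
by rewrite (inj_eq lift_inj) [in RHS]mxE [in RHS]mxE.
Qed.

Lemma minor_adj (R : comNzRingType) N (C : 'M[R]_N) i j :
  \det (row' j (col' i C)) = (-1) ^+ (j + i) * \adj C i j.
Proof. by rewrite [\adj C i j]mxE /cofactor signrMK. Qed.

Lemma coef_sign (R : comNzRingType) s (p : {poly R}) k :
  ((-1) ^+ s * p)`_k = (-1) ^+ s * p`_k.
Proof. by rewrite -signr_odd mulr_sign -signr_odd mulr_sign; case: (odd s); rewrite ?coefN. Qed.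

Lemma sign_neq0 (R : idomainType) s (x : R) : ((-1) ^+ s * x != 0) = (x != 0).
Proof. by rewrite -signr_odd mulr_sign; case: (odd s); rewrite ?oppr_eq0. Qed.

Lemma minor0 n (i j : 'I_n.+1) : i != j ->
  \det (row' j (col' i (char_poly_mx (0 : 'M[rat]_n.+1)))) = 0.
Proof.
move=> hij; have [a ha _] : {a | i = lift j a & unlift j i = Some a}.
  by apply: unlift_some; rewrite eq_sym.
have e : forall b, row' j (col' i (char_poly_mx (0 : 'M[rat]_n.+1))) a b = 0.
  move=> b; rewrite [LHS]mxE [LHS]mxE cpmE -ha (negbTE (neq_lift _ _)) mulr0n.
  by rewrite mxE polyC0 subr0.
by rewrite (expand_det_row _ a) big1 // => b _; rewrite e mul0r.
Qed.

Lemma mconst0 k (p : {mpoly rat[k]}) : p = 0 -> mconstant p.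
Proof. by move=> ->; exists 0; rewrite mpolyC0. Qed.

Lemma comp_hA N (E : rel 'I_N) Leak z y :
  z != y -> comp_matrix E Leak z y != 0 -> E y z.
Proof. by move=> h; rewrite mxE (negbTE h); case: (E y z); rewrite ?eqxx. Qed.

Lemma colsum0 N (E : rel 'I_N) Leak : loopless E -> Leak = set0 ->
  forall k, \sum_l comp_matrix E Leak l k = 0.
Proof.
move=> hll hL k; rewrite (bigD1 k) //= mxE eqxx hL in_set0 subr0.
under eq_bigr => l hl do rewrite mxE (negbTE hl).
rewrite -big_mkcondr /=.
rewrite [X in _ + X](eq_bigl (fun l => E k l)); first by rewrite addNr.
move=> l /=; case: (eqVneq l k) => [->|]; last by [].
by rewrite (negbTE (hll k)).
Qed.

Lemma det_colsum0 (R : idomainType) N (A : 'M[R]_N.+1) :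
  (forall k, \sum_l A l k = 0) -> \det A = 0.
Proof.
move=> h; pose v : 'rV[R]_N.+1 := const_mx 1.
have hv : v *m A = 0.
  apply/matrixP => x k; rewrite !mxE -[RHS](h k).
  by apply: eq_bigr => l _; rewrite mxE mul1r.
have : v *m A *m \adj A = 0 by rewrite hv mul0mx.
rewrite -mulmxA mul_mx_adj mul_mx_scalar => /eqP; rewrite scalemx_eq0.
case/orP => [/eqP //|/eqP hv0].
by have := congr1 (fun B : 'rV[R]_N.+1 => B 0 0) hv0; rewrite !mxE => /eqP; rewrite oner_eq0.
Qed.

Lemma lhs0 n (E : rel 'I_n.+1) Leak : loopless E -> Leak = set0 -> (io_lhs E Leak)`_0 = 0.
Proof.
move=> hll hL; rewrite /io_lhs char_poly_det det_colsum0 ?mulr0 //.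
exact: colsum0.
Qed.

Lemma tree_char_true N (E : rel 'I_N) (Leak : {set 'I_N}) (r : 'I_N) (sc : strongly_connected E) :
  r \in Leak -> char_poly (smx E Leak (ftree r sc true)) = ('X + 1) ^+ N.
Proof.
move=> hr; rewrite tree_char.
under eq_bigr => k _ do rewrite tree_diag /= hr.
rewrite (eq_bigr (fun _ => 'X + 1)); first by rewrite prodr_const card_ord.
by move=> k _; case: (k == r); rewrite ?opprK rmorphN rmorph1 opprK.
Qed.

Lemma tree_char_false n (E : rel 'I_n.+1) Leak r (sc : strongly_connected E) :
  char_poly (smx E Leak (ftree r sc false)) = 'X * ('X + 1) ^+ n.
Proof.
rewrite tree_char (bigD1 r) // tree_diag eqxx andFb oppr0 ?polyC0 ?subr0 ?oppr0 ?addr0.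
congr (_ * _).
under eq_bigr => k hk do rewrite tree_diag (negbTE hk) rmorphN rmorph1 opprK.
by rewrite prodr_const cardC1 card_ord.
Qed.

Lemma minor_tree n (E : rel 'I_n.+1) Leak j (sc : strongly_connected E) :
  \det (row' j (col' j (char_poly_mx (smx E Leak (ftree j sc false))))) = ('X + 1) ^+ n.
Proof.
rewrite (@det_graded _ _ _ (fun a => dist j sc (lift j a))); last first.
  move=> a b hab hd; rewrite [LHS]mxE [LHS]mxE tree_graded //.
  by rewrite (inj_eq lift_inj).
rewrite (eq_bigr (fun _ => 'X + 1)); first by rewrite prodr_const card_ord.
move=> a _; rewrite [LHS]mxE [LHS]mxE cpmE eqxx mulr1n tree_diag.
by rewrite eq_sym (negbTE (neq_lift _ _)) rmorphN rmorph1 opprK.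
Qed.

Lemma rowcol0 n (j : 'I_n.+1) : row' j (col' j (0 : 'M[rat]_n.+1)) = 0.
Proof. by apply/matrixP => a b; rewrite !mxE. Qed.

Unset Implicit Arguments.
Set Strict Implicit.

Theorem corollary3p2 (n : nat) (E : rel 'I_n.+1) (Leak : {set 'I_n.+1})
    (i j : 'I_n.+1) :
  loopless E -> strongly_connected E ->
  (forall k : nat, (k < n.+1)%N ->
     ~ mconstant (io_lhs E Leak)`_k <-> (Leak != set0 \/ (0 < k)%N)) /\
  (i = j -> forall k : nat, (k < n.+1)%N ->
     ~ mconstant (io_rhs E Leak i j)`_k <-> (k + 2 <= n.+1)%N) /\
  (forall L : nat, i <> j -> shortest_path_length E j i L ->
     forall k : nat, (k < n.+1)%N ->
     ~ mconstant (io_rhs E Leak i j)`_k <-> (k + L + 1 <= n.+1)%N).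
Proof.
move=> hll sc.
pose f0 := fun _ : param n.+1 => 0 : rat.
split; [|split].
- move=> k hk; split.
  + move=> hnc; case: (boolP (Leak != set0)) => hL; [by left|right].
    rewrite lt0n; apply/negP => /eqP hk0; apply: hnc; apply: mconst0.
    by rewrite hk0 lhs0 //; apply/eqP; rewrite -[_ == _]negbK hL.
  + case: (boolP (Leak != set0)) => hL H.
      have [r hr] := set0Pn _ hL.
      apply: (@nonconst _ _ (spec f0) (spec (ftree r sc true))).
      rewrite !eval_lhs smx0 char_poly0 tree_char_true // coefXn ltn_eqF //.
      by rewrite eq_sym; apply: coefX1_neq0; exact: ltnW.
    case: H => [//|hk0].
    apply: (@nonconst _ _ (spec f0) (spec (ftree j sc false))).
    rewrite !eval_lhs smx0 char_poly0 tree_char_false coefXn ltn_eqF // coefXM.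
    case: k hk hk0 => // k hk _ /=.
    by rewrite eq_sym; apply: coefX1_neq0; lia.
- move=> <- k hk; split.
  + move=> hnc; rewrite leqNgt; apply/negP => hgt; apply: hnc.
    have -> : k = n by lia.
    exists 1; rewrite mpolyC1 /io_rhs sub_cp.
    have := char_poly_monic (row' i (col' i (comp_matrix E Leak))).
    by rewrite monicE /lead_coef size_char_poly /= => /eqP.
  + move=> hk2.
    apply: (@nonconst _ _ (spec f0) (spec (ftree i sc false))).
    rewrite !eval_rhs smx0 sub_cp rowcol0 -/(char_poly _) char_poly0 coefXn.
    rewrite (_ : (k == n) = false); last by apply/eqP; lia.
    rewrite minor_tree eq_sym; apply: coefX1_neq0; lia.
- move=> L hij [hL hLmin] k hk.
  have hdj : dist i sc j = L.
    apply/eqP; rewrite eqn_leq (dist_min sc hL) /=; apply: hLmin; exact: dist_hp.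
  split.
  + move=> hnc; rewrite leqNgt; apply/negP => hgt; apply: hnc; apply: mconst0.
    rewrite /io_rhs minor_adj coef_sign.
    suff -> : (\adj (char_poly_mx (comp_matrix E Leak)) i j)`_k = 0 by rewrite mulr0.
    apply/eqP; rewrite -[_ == _]negbK; apply/negP => h.
    have [t ht hpt] := adj_coef_path (@comp_hA _ E Leak) h.
    have := hLmin _ hpt; move: ht => /=; lia.
  + move=> hkL.
    have hL1 : (1 <= L)%N.
      rewrite lt0n -hdj (@dist0 _ _ i sc); apply/eqP => e; exact: hij (esym e).
    have hLn : (L <= n)%N by lia.
    apply: (@nonconst _ _ (spec f0) (spec (ftree i sc false))).
    rewrite !eval_rhs smx0 minor0 ?coef0; last by apply/eqP.
    rewrite minor_adj coef_sign (adj_tree Leak hdj hL1 hLn) eq_sym sign_neq0.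
    apply: coefX1_neq0; lia.
Qed.
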